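(* Let $A$ be a finite set and let $<_1$ and $<_2$ be semi-linear strict partial orders on $A$. If the transitive closure $<_1\bar\cup<_2$ of the union of the relations $<_1$ and $<_2$ is irreflexive, then it is a semi-linear strict partial order.
   Context: A strict partial order on $A$ is a transitive irreflexive relation. A strict partial order $<$ is semi-linear if there is a surjective function $h:A\to\{1,\dots,l\}$ (for some $l$) such that $a<b$ iff $h(a)<h(b)$. *)

(* Defs.v *)
From Stdlib Require Import Relations Relation_Operators.
From mathcomp Require Import all_boot.

Definition strict_partial_order {A : Type} (R : A -> A -> Prop) : Prop :=
  (forall a b c, R a b -> R b c -> R a c) /\ (forall a, ~ R a a).

Definition semi_linear {A : Type} (R : A -> A -> Prop) : Prop :=
  strict_partial_order R /\
  exists (l : nat) (h : A -> nat),
    (forall a, 1 <= h a <= l) /\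
    (forall k, 1 <= k <= l -> exists a, h a = k) /\
    (forall a b, R a b <-> h a < h b).

Definition rel_union {A : Type} (R1 R2 : A -> A -> Prop) : A -> A -> Prop :=
  fun a b => R1 a b \/ R2 a b.

Definition tc_union {A : Type} (R1 R2 : A -> A -> Prop) : A -> A -> Prop :=
  clos_trans A (rel_union R1 R2).

(* Main.v *)
Require Import Defs.
From Stdlib Require Import Relations Relation_Operators.
From mathcomp Require Import all_boot.
From Stdlib Require Import Classical ClassicalEpsilon.
From mathcomp Require Import zify.

Lemma neg_sl (A : Type) (R : A -> A -> Prop) :
  semi_linear R -> forall a b c, R a b -> R a c \/ R c b.
Proof.
move=> [_ [l [h [_ [_ H]]]]] a b c /H hab.
case: (ltnP (h a) (h c)) => hc; first by left; apply/H.
by right; apply/H; exact: leq_ltn_trans hc hab.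
Qed.

Lemma cut_exists (A : eqType) (h : A -> nat) (l : nat) (P Q : A -> Prop) :
  forall s : seq A, (forall y, y \in s -> 1 <= h y <= l) ->
  (forall y z, y \in s -> z \in s -> P y -> Q z -> h y < h z) ->
  exists k0, 1 <= k0 <= l.+1 /\ (forall y, y \in s -> P y -> h y < k0) /\
     (forall z, z \in s -> Q z -> k0 <= h z).
Proof.
elim=> [|y s IH] Hb Hpq.
  by exists 1; split; [|split=> z].
have [k0 [Hk [HP HQ]]] : exists k0, 1 <= k0 <= l.+1 /\ (forall y, y \in s -> P y -> h y < k0) /\
     (forall z, z \in s -> Q z -> k0 <= h z).
  apply: IH.
  - by move=> z zs; apply: Hb; rewrite inE zs orbT.
  - by move=> z w zs ws; apply: Hpq; rewrite inE ?zs ?ws orbT.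
have yy : y \in y :: s by rewrite inE eqxx.
have hy := Hb y yy.
case: (classic (P y)) => Py.
  exists (maxn k0 (h y).+1); split; first by lia.
  split => z; rewrite inE => /orP [/eqP -> | zs] Pz.
  - by lia.
  - by have := HP z zs Pz; lia.
  - by have := Hpq y y yy yy Py Pz; lia.
  - have := HQ z zs Pz; have := Hpq y z yy; rewrite inE zs orbT => /(_ isT Py Pz); lia.
case: (classic (Q y)) => Qy.
  exists (minn k0 (h y)); split; first by lia.
  split => z; rewrite inE => /orP [/eqP -> | zs] Pz.
  - by [].
  - have := HP z zs Pz; have := Hpq z y; rewrite inE zs orbT => /(_ isT yy Pz Qy); lia.
  - by lia.
  - by have := HQ z zs Pz; lia.
exists k0; split => //.
split => z; rewrite inE => /orP [/eqP -> | zs] Pz //.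
- by apply: HP.
- by apply: HQ.
Qed.

Lemma weak_rank (A : eqType) (T : A -> A -> Prop)
  (Ttr : forall a b c, T a b -> T b c -> T a c)
  (Tirr : forall a, ~ T a a)
  (Tneg : forall a b c, T a b -> T a c \/ T c b) :
  forall s : seq A, exists l (h : A -> nat),
    (forall a, a \in s -> 1 <= h a <= l) /\
    (forall k, 1 <= k <= l -> exists a, a \in s /\ h a = k) /\
    (forall a b, a \in s -> b \in s -> (T a b <-> h a < h b)).
Proof.
elim=> [|x s [l [h [Hb [Hs Ho]]]]].
  exists 0, (fun _ => 0); split => //; split => //.
  by move=> k; lia.
case: (classic (exists y, y \in s /\ ~ T x y /\ ~ T y x)) => [[y [ys [nxy nyx]]] | Hc].
  pose rep a := if a == x then y else a.
  have repE : forall a, a \in x :: s -> rep a \in s.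
    by move=> a; rewrite /rep inE; case: eqP.
  have keyR : forall b, T x b <-> T y b.
    move=> b; split => H.
    - by case: (Tneg _ _ y H).
    - by case: (Tneg _ _ x H).
  have keyL : forall b, T b x <-> T b y.
    move=> b; split => H.
    - by case: (Tneg _ _ y H).
    - by case: (Tneg _ _ x H).
  have Trep : forall a b, T a b <-> T (rep a) (rep b).
    move=> a b; rewrite /rep; case: eqP => [->|_]; case: eqP => [->|_] //.
    - split => H; [by case: (Tirr x) | by case: (Tirr y)].
  exists l, (fun a => h (rep a)); split; last split.
  - by move=> a /repE; apply: Hb.
  - move=> k /Hs [a [as_ ha]].
    exists a; split; first by rewrite inE as_ orbT.
    rewrite /rep; case: eqP => // ax; subst a.
    rewrite -ha; apply/eqP; rewrite eqn_leq.
    case: (ltnP (h y) (h x)) => H1; first by case: nyx; apply/(Ho y x ys as_).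
    case: (ltnP (h x) (h y)) => H2; first by case: nxy; apply/(Ho x y as_ ys).
    by lia.
  - by move=> a b /repE ra /repE rb; rewrite Trep; apply: Ho.
have Hcmp : forall y, y \in s -> T x y \/ T y x.
  move=> y ys; case: (classic (T x y)) => H; [by left|right].
  apply: NNPP => H'; apply: Hc; by exists y.
have xs : x \notin s.
  apply/negP => xs; case: (Hcmp x xs) => /Tirr //.
have [k0 [Hk [HP HQ]]] := @cut_exists _ h l (fun y => T y x) (T x) s Hb
   (fun y z ys zs Hy Hz => proj1 (Ho y z ys zs) (Ttr _ _ _ Hy Hz)).
pose h' z := if z == x then k0 else
   if excluded_middle_informative (T x z) then (h z).+1 else h z.
exists l.+1, h'; split; last split.
- move=> a; rewrite inE => /orP [/eqP -> | as_]; first by rewrite /h' /= eqxx; lia.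
  rewrite /h' /=; case: ifP => [/eqP ax|_]; first by lia.
  destruct (excluded_middle_informative (T x a)); have := Hb a as_; rewrite /=; lia.
- move=> k Hkl.
  case: (ltngtP k k0) => Hkk.
  + have [|a [as_ ha]] := Hs k; first by lia.
    exists a; split; first by rewrite inE as_ orbT.
    rewrite /h' /=; case: ifP => [/eqP ax|_]; first by rewrite -ax as_ in xs.
    destruct (excluded_middle_informative (T x a)) as [Txa|Txa]; rewrite /=; last done.
    by have := HQ a as_ Txa; lia.
  + have [|a [as_ ha]] := Hs k.-1; first by lia.
    exists a; split; first by rewrite inE as_ orbT.
    rewrite /h' /=; case: ifP => [/eqP ax|_]; first by rewrite -ax as_ in xs.
    destruct (excluded_middle_informative (T x a)) as [Txa|Txa]; rewrite /=; first by lia.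
    case: (Hcmp a as_) => // Tax.
    by have := HP a as_ Tax; lia.
  + by exists x; rewrite inE eqxx /h' eqxx.
- have hs : forall a, a \in s -> h' a = if excluded_middle_informative (T x a) then (h a).+1 else h a.
    by move=> a as_; rewrite /h' /=; case: ifP => // /eqP ax; rewrite -ax as_ in xs.
  have hx : h' x = k0 by rewrite /h' /= eqxx.
  move=> a b; rewrite !inE => /orP [/eqP -> | as_] /orP [/eqP -> | bs].
  + by rewrite hx ltnn; split => // /Tirr.
  + rewrite hx hs //; destruct (excluded_middle_informative (T x b)) as [Txb|Txb]; rewrite /=.
      by have := HQ b bs Txb; split => //; lia.
    case: (Hcmp b bs) => // Tbx; have := HP b bs Tbx; split => //; lia.
  + rewrite hx hs //; destruct (excluded_middle_informative (T x a)) as [Txa|Txa]; rewrite /=.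
      have := HQ a as_ Txa; split; last lia.
      by move=> Tax; case: (Tirr x); exact: Ttr Txa Tax.
    case: (Hcmp a as_) => // Tax; have := HP a as_ Tax; split => //; lia.
  + rewrite !hs //; have Hab := Ho a b as_ bs.
    destruct (excluded_middle_informative (T x a)) as [Txa|Txa]; destruct (excluded_middle_informative (T x b)) as [Txb|Txb]; rewrite /=.
    * by rewrite ltnS.
    * case: (Hcmp b bs) => // Tbx.
      have Tba := Ttr _ _ _ Tbx Txa; have := proj1 (Ho b a bs as_) Tba.
      split; last lia.
      by move=> Tab; case: (Tirr a); exact: Ttr Tab Tba.
    * case: (Hcmp a as_) => // Tax.
      have Tab := Ttr _ _ _ Tax Txb; have := proj1 Hab Tab.
      split => // _; lia.
    * exact: Hab.
Qed.

Lemma tc_neg (A : Type) (R1 R2 : A -> A -> Prop) :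
  semi_linear R1 -> semi_linear R2 ->
  forall a b c, tc_union R1 R2 a b -> tc_union R1 R2 a c \/ tc_union R1 R2 c b.
Proof.
move=> S1 S2 a b c /clos_trans_t1n_iff H.
case: H => [y Hy | y z Hy Hz].
- case: Hy => [H|H].
  + case: (@neg_sl _ _ S1 a y c H) => H'; [left|right]; apply: t_step; by left.
  + case: (@neg_sl _ _ S2 a y c H) => H'; [left|right]; apply: t_step; by right.
- have Hz' : tc_union R1 R2 y z by apply/clos_trans_t1n_iff.
  case: Hy => [H|H].
  + case: (@neg_sl _ _ S1 a y c H) => H'; [left; apply: t_step; by left|right].
    apply: t_trans Hz'; apply: t_step; by left.
  + case: (@neg_sl _ _ S2 a y c H) => H'; [left; apply: t_step; by right|right].
    apply: t_trans Hz'; apply: t_step; by right.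
Qed.

Theorem lemma4p2 (A : finType) (R1 R2 : A -> A -> Prop) :
  semi_linear R1 -> semi_linear R2 ->
  (forall a, ~ tc_union R1 R2 a a) ->
  semi_linear (tc_union R1 R2).
Proof.
move=> S1 S2 Hirr.
have Htr : forall a b c, tc_union R1 R2 a b -> tc_union R1 R2 b c -> tc_union R1 R2 a c.
  by move=> a b c; apply: t_trans.
split; first by split.
have [l [h [Hb [Hs Ho]]]] := @weak_rank A _ Htr Hirr (@tc_neg _ _ _ S1 S2) (enum A).
exists l, h; split; last split.
- by move=> a; apply: Hb; rewrite mem_enum.
- by move=> k /Hs [a [_ ha]]; exists a.
- by move=> a b; apply: Ho; rewrite mem_enum.
Qed.
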